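(* Let $n_1,n_2,n_3$ be pairwise coprime positive integers forming a minimal system of generators of $\mathcal S=\langle n_1,n_2,n_3\rangle$, and let $\{i,j,k\}=\{1,2,3\}$. Let $\lambda_{ij}=[-n_in_j^{-1}]_{n_k}$, $\lambda_{ik}=[-n_in_k^{-1}]_{n_j}$ (so that $n_i=n_jn_k-\lambda_{ij}n_j-\lambda_{ik}n_k$), and put $N_i=n_jn_k-\lambda_{ij}n_j-n_k$. Let $\mathcal T_k=\{x\in\mathbb N: xn_k\in\langle n_j,N_i\rangle\}$. Then $$\mathcal S_k=\{\,x-(\lambda_{ik}-1)[-x]_{n_j}\ :\ x\in\mathcal T_k\,\}.$$
   Context: $\mathbb N$ denotes the nonnegative integers. For integers $a_1,\dots,a_r$, $\langle a_1,\dots,a_r\rangle=\{\sum t_la_l: t_l\in\mathbb N\}$. Minimal system of generators means that no $n_l$ belongs to the monoid generated by the other two. For an integer $m$ and $n\ge 1$, $[m]_n\in\{0,\dots,n-1\}$ denotes the remainder of $m$ upon division by $n$; for $a$ coprime to $n$, the symbol $a^{-1}$ inside $[\cdot]_n$ denotes a multiplicative inverse of $a$ modulo $n$. For $\{i,j,k\}=\{1,2,3\}$, $\mathcal S_k=\{M\in\mathbb N: Mn_k\in\langle n_i,n_j\rangle\}$ and $c_k=\min(\mathcal S_k\setminus\{0\})$ (the minimal relation for $n_k$). *)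

(* Defs.v *)
From mathcomp Require Import all_boot all_order all_algebra.
Set Implicit Arguments. Unset Strict Implicit. Unset Printing Implicit Defensive.
Import GRing.Theory Num.Theory.

(* m \in <a, b> : m is a nonnegative integer combination of a and b
   (stated over int so that possibly negative generators make sense). *)
Definition inmon2 (a b m : int) : Prop :=
  exists s t : nat, m = (s%:Z * a + t%:Z * b)%R.

(* A multiplicative inverse of a modulo n (for a > 0, coprime a n),
   given by the Bezout coefficient: (egcdn a n).1 * a = 1 mod n. *)
Definition invmod (a n : nat) : nat := (egcdn a n).1 %% n.

Definition negmod (m n : nat) : nat := (n - m %% n) %% n.

Definition lam (a b c : nat) : nat := negmod (a * invmod b c) c.

Definition inS (ni nj nk M : nat) : Prop :=
  inmon2 ni%:Z nj%:Z (M * nk)%:Z.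

Definition bigN (ni nj nk : nat) : int :=
  (nj%:Z * nk%:Z - (lam ni nj nk)%:Z * nj%:Z - nk%:Z)%R.

Definition inT (ni nj nk x : nat) : Prop :=
  inmon2 nj%:Z (bigN ni nj nk) (x * nk)%:Z.

Definition phi (ni nj nk x : nat) : int :=
  (x%:Z - ((lam ni nk nj)%:Z - 1) * (negmod x nj)%:Z)%R.

(* Main.v *)
Require Import Defs.
From mathcomp Require Import all_boot all_order all_algebra.
From mathcomp Require Import zify.

Lemma negmodP n m : 0 < n -> n %| negmod m n + m.
Proof.
move=> n0; rewrite /dvdn /negmod modnDml -modnDmr.
by rewrite (subnK (ltnW (ltn_pmod m n0))) modnn.
Qed.

Lemma negmod_uniq n x s : 0 < n -> n %| x + s -> s %% n = negmod x n.
Proof.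
move=> n0 h.
have h1 : s + x = negmod x n + x %[mod n].
  have := @negmodP n x n0; rewrite /dvdn => /eqP ->.
  by move: h; rewrite /dvdn addnC => /eqP ->.
by move/eqP: h1; rewrite eqn_modDr => /eqP ->; rewrite /negmod modn_mod.
Qed.

Lemma lamP a b c : 0 < c -> 0 < b -> coprime b c -> c %| a + lam a b c * b.
Proof.
move=> c0 b0 cop; rewrite /lam /invmod.
case: (egcdnP c b0) => u v Huv _ /=.
rewrite (eqP cop) in Huv.
set N := negmod _ c.
have h := @negmodP c (a * (u %% c)) c0.
have E : (N + a*(u%%c))*b + a*(u%/c)*b*c = (a + N*b) + a*v*c.
  have Hd := divn_eq u c; have H2 := congr1 (muln a) Huv.
  move: Hd H2; move: (u %/ c) (u %% c) => q r Hd H2; subst u; lia.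
have : c %| (a + N*b) + a*v*c.
  by rewrite -E dvdn_add // ?(dvdn_mull _ (dvdnn c)) // dvdn_mulr.
by rewrite dvdn_addl // dvdn_mull.
Qed.

Lemma lam_lt a b c : 0 < c -> lam a b c < c.
Proof. by move=> c0; rewrite /lam /negmod ltn_pmod. Qed.

Theorem mainTheorem3 (ni nj nk : nat) :
  0 < ni -> 0 < nj -> 0 < nk ->
  coprime ni nj -> coprime ni nk -> coprime nj nk ->
  ~ inmon2 (Posz nj) (Posz nk) (Posz ni) ->
  ~ inmon2 (Posz ni) (Posz nk) (Posz nj) ->
  ~ inmon2 (Posz ni) (Posz nj) (Posz nk) ->
  (forall M : nat, inS ni nj nk M ->
     exists x : nat, inT ni nj nk x /\ (Posz M) = phi ni nj nk x) /\
  (forall x : nat, inT ni nj nk x ->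
     exists M : nat, inS ni nj nk M /\ (Posz M) = phi ni nj nk x).
Proof.
move=> a0 b0 c0 cab cac cbc H7 H8 H9.
set a := ni in a0 cab cac H7 H8 H9 *.
set b := nj in b0 cab cbc H7 H8 H9 *.
set c := nk in c0 cac cbc H7 H8 H9 *.
have hc : c %| a + lam a b c * b by apply: lamP.
have hb : b %| a + lam a c b * c by apply: lamP; rewrite // coprime_sym.
have ltl : lam a b c < c by apply: lam_lt.
have ltu : lam a c b < b by apply: lam_lt.
have [u' Hu'] : exists u', lam a c b = u'.+1.
  case E: (lam a c b) => [|u']; last by exists u'.
  exfalso; rewrite E mul0n addn0 in hb.
  have b1 : b = 1.
    by apply/eqP; rewrite -dvdn1 -(eqP cab) dvdn_gcd hb dvdnn.
  apply: H7; exists a, 0%N; rewrite b1; lia.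
set l := lam a b c in hc ltl *.
rewrite Hu' in hb ltu.
have Hid : a + l*b + u'.+1*c = b*c.
  have hbc : b*c %| a + l*b + u'.+1*c.
    rewrite Gauss_dvd // ; apply/andP; split.
      have -> : a + l*b + u'.+1*c = (a + u'.+1*c) + l*b by lia.
      by rewrite dvdn_add // (dvdn_mull _ (dvdnn _)).
    by rewrite dvdn_add // (dvdn_mull _ (dvdnn _)).
  case/dvdnP: hbc => m Hm.
  case: m Hm => [|[|m]] Hm; first by lia.
    by rewrite Hm mul1n.
  exfalso; apply: H7.
  have [c' Hc'] : exists c', c = l + c' by exists (c - l); rewrite subnKC // ltnW.
  have [b' Hb'] : exists b', b = u'.+1 + b' by exists (b - u'.+1); rewrite subnKC // ltnW.
  exists (m*c + c'), b'.
  rewrite -!PoszM -PoszD; congr Posz.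
  rewrite Hc' Hb' in Hm *; lia.
set N := a + u'*c.
have HN : bigN a b c = Posz N.
  rewrite /bigN /N -/l.
  have HidZ : Posz (a + l*b + u'.+1*c) = Posz (b*c) by rewrite Hid.
  rewrite !PoszD !PoszM in HidZ; rewrite PoszD PoszM; lia.
have Ldiv : forall x s T, x*c = s*N + T*b -> b %| x + s.
  move=> x s T E.
  have E2 : (x + s)*c = s*(a + u'.+1*c) + T*b by rewrite /N in E; lia.
  rewrite -(Gauss_dvdl _ cbc) E2 dvdn_add // ?dvdn_mull //.
split.
- move=> M [s [t Hs]].
  rewrite -!PoszM -PoszD in Hs; case: Hs => Hs.
  have Hsd := divn_eq s b.
  set r := s %% b in Hsd; set q := s %/ b in Hsd.
  set x := (M + r*u')%N.
  have Ex : x*c = r*N + (q*a + t)*b.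
    rewrite /x /N; rewrite Hsd in Hs; lia.
  have Hneg : negmod x b = r.
    by rewrite -(negmod_uniq _ _ _ b0 (Ldiv _ _ _ Ex)) /r modn_mod.
  exists x; split.
    exists (q*a + t)%N, r; rewrite /bigN.
    rewrite -/(bigN a b c) HN -!PoszM -PoszD; congr Posz.
    by rewrite Ex addnC.
  rewrite /phi -/a -/b -/c Hu' Hneg /x; lia.
- move=> x [t [s Hx]].
  rewrite HN -!PoszM -PoszD in Hx; case: Hx => Hx.
  rewrite addnC in Hx.
  have Hr := negmod_uniq _ _ _ b0 (Ldiv _ _ _ Hx).
  have Hsd := divn_eq s b.
  set r := negmod x b in Hr; rewrite Hr in Hsd.
  set q := s %/ b in Hsd.
  have Ex : x*c = r*(a + u'*c) + (q*N + t)*b.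
    rewrite Hsd in Hx; rewrite /N in Hx *; lia.
  have Hge : r*u' <= x.
    rewrite -(leq_pmul2r c0) Ex; lia.
  exists (x - r*u')%N; split.
    exists r, (q*N + t)%N; rewrite -!PoszM -PoszD; congr Posz.
    rewrite mulnBl Ex; lia.
  rewrite /phi -/a -/b -/c Hu' -/r; lia.
Qed.
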